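(* Fix $N\ge1$, let $\mathbf{F}$ be any one of $\mathbf{F}^{\rm Midpt},\mathbf{F}^{\rm Mass},\mathbf{F}^{\rm Eng}$ (defined in the context), and let $\mathbf{b}(t)$ be the solution of the toy model system with initial condition $\mathbf{b}(0)\in\mathbb{C}^N$. Then there is a constant $C$ depending only on $\|\mathbf{b}(0)\|_2$ such that, for a time step $\Delta t>0$ and $t_n=n\Delta t$, the local truncation error satisfies $$\|\mathbf{b}(t_{n+1})-\mathbf{b}(t_n)-\Delta t\,\mathbf{F}(\mathbf{b}(t_n),\mathbf{b}(t_{n+1}))\|\le C\,\Delta t^3 .$$
   Context: The toy model system is $-i\dot b_j=-|b_j|^2b_j+2b_{j-1}^2\bar b_j+2b_{j+1}^2\bar b_j$, $j=1,\dots,N$, with $b_0(t)=b_{N+1}(t)=0$. $\|\cdot\|=\|\cdot\|_2$ is the Euclidean norm on $\mathbb{C}^N$. For $\mathbf{u},\mathbf{v}\in\mathbb{C}^N$ set $u_0=u_{N+1}=v_0=v_{N+1}=0$, $m_j=\tfrac12(u_j+v_j)$, $a_j=\tfrac12(|u_j|^2+|v_j|^2)$, $q_j=\tfrac12(u_j^2+v_j^2)$, and for $j=1,\dots,N$: $F^{\rm Midpt}_j(\mathbf{u},\mathbf{v})=-i|m_j|^2m_j+2i\,\bar m_j(m_{j-1}^2+m_{j+1}^2)$; $F^{\rm Mass}_j(\mathbf{u},\mathbf{v})=-i\,a_jm_j+2i\,\bar m_j(m_{j+1}^2+m_{j-1}^2)$; $F^{\rm Eng}_j(\mathbf{u},\mathbf{v})=-i\,a_jm_j+2i\,\bar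 m_j(q_{j+1}+q_{j-1})$. The corresponding numerical schemes are $\mathbf{b}_{n+1}=\mathbf{b}_n+\Delta t\,\mathbf{F}(\mathbf{b}_n,\mathbf{b}_{n+1})$. *)

(* Defs.v *)
From Stdlib Require Import Reals.
From Coquelicot Require Import Coquelicot.
Open Scope R_scope.

(* Complex vectors of C^N are represented as functions nat -> C, of which only
   indices 1..N are meaningful.  [ext N u] zeroes everything outside 1..N,
   which implements the convention u_0 = u_{N+1} = 0. *)
Definition cvec := nat -> Complex.C.

Definition ext (N : nat) (u : cvec) : cvec :=
  fun j => if andb (Nat.leb 1 j) (Nat.leb j N) then u j else RtoC 0.

Definition cnorm (N : nat) (u : cvec) : R :=
  sqrt (sum_n_m (fun j => Cmod (u j) ^ 2) 1 N).

Inductive scheme := Midpt | Mass | Eng.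

Definition mid (N : nat) (u v : cvec) (j : nat) : Complex.C :=
  ((ext N u j + ext N v j) / 2)%C.
Definition avm (N : nat) (u v : cvec) (j : nat) : Complex.C :=
  RtoC ((Cmod (ext N u j) ^ 2 + Cmod (ext N v j) ^ 2) / 2).
Definition avq (N : nat) (u v : cvec) (j : nat) : Complex.C :=
  ((ext N u j * ext N u j + ext N v j * ext N v j) / 2)%C.

Definition Fsch (s : scheme) (N : nat) (u v : cvec) (j : nat) : Complex.C :=
  let m := mid N u v in
  match s with
  | Midpt =>
      (- Ci * RtoC (Cmod (m j) ^ 2) * m j
       + 2 * Ci * Cconj (m j) * (m (j - 1)%nat * m (j - 1)%nat + m (j + 1)%nat * m (j + 1)%nat))%C
  | Mass =>
      (- Ci * avm N u v j * m j
       + 2 * Ci * Cconj (m j) * (m (j + 1)%nat * m (j + 1)%nat + m (j - 1)%nat * m (j - 1)%nat))%C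
  | Eng =>
      (- Ci * avm N u v j * m j
       + 2 * Ci * Cconj (m j) * (avq N u v (j + 1)%nat + avq N u v (j - 1)%nat))%C
  end.

(* Right-hand side of the toy model written as b_j' = i * (...):
   -i b_j' = -|b_j|^2 b_j + 2 b_{j-1}^2 conj(b_j) + 2 b_{j+1}^2 conj(b_j). *)
Definition toy_rhs (b : cvec) (j : nat) : Complex.C :=
  (Ci * (- RtoC (Cmod (b j) ^ 2) * b j
         + 2 * (b (j - 1)%nat * b (j - 1)%nat) * Cconj (b j)
         + 2 * (b (j + 1)%nat * b (j + 1)%nat) * Cconj (b j)))%C.

Definition toy_solution (N : nat) (b : R -> cvec) : Prop :=
  (forall t, b t 0%nat = RtoC 0) /\ (forall t, b t (S N) = RtoC 0) /\
  (forall t j, (1 <= j <= N)%nat ->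
     is_derive (fun s => b s j) t (toy_rhs (b t) j)).

Definition lte (s : scheme) (N : nat) (b : R -> cvec) (dt : R) (n : nat) : cvec :=
  let t0 := (INR n * dt)%R in
  let t1 := (INR (S n) * dt)%R in
  fun j => (b t1 j - b t0 j - RtoC dt * Fsch s N (b t0) (b t1) j)%C.

(* Main.v *)
Require Import Defs.
From Stdlib Require Import Reals Lra Lia.
From Coquelicot Require Import Coquelicot.
Open Scope R_scope.
Ltac Rring := cbv beta; match goal with |- ?a = ?b => change (@eq R a b) end; ring.
Lemma MVI_R (g g' : R -> R) a b M : a <= b -> (forall s, is_derive g s (g' s)) ->
  (forall s, a <= s <= b -> Rabs (g' s) <= M) -> Rabs (g b - g a) <= M * (b - a).
Proof.
  intros Hab Hd Hb.
  destruct (MVT_gen g a b g') as [c [Hc Heq]].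
  - intros x _. apply Hd.
  - intros x _. apply continuity_pt_filterlim. exact (ex_derive_continuous (K:=R_AbsRing) (V:=R_NormedModule) g x (ex_intro _ _ (Hd x))).
  - rewrite Rmin_left in Hc by lra. rewrite Rmax_right in Hc by lra.
    rewrite Heq, Rabs_mult, (Rabs_right (b - a)) by lra.
    apply Rmult_le_compat_r; [lra|]. apply Hb; lra.
Qed.

Lemma is_derive_Re (f : R -> C) x l : is_derive f x l -> is_derive (fun t => Re (f t)) x (Re l).
Proof.
  intro H. unfold is_derive in *.
  eapply filterdiff_ext_lin.
  - apply (filterdiff_comp' f (fun t : C_R_NormedModule => fst t) x (fun y : R_AbsRing => scal y l) (fun t : C_R_NormedModule => fst t) H).
    apply filterdiff_linear. apply is_linear_fst.
  - intros y. simpl. reflexivity.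
Qed.
Lemma is_derive_Im (f : R -> C) x l : is_derive f x l -> is_derive (fun t => Im (f t)) x (Im l).
Proof.
  intro H. unfold is_derive in *.
  eapply filterdiff_ext_lin.
  - apply (filterdiff_comp' f (fun t : C_R_NormedModule => snd t) x (fun y : R_AbsRing => scal y l) (fun t : C_R_NormedModule => snd t) H).
    apply filterdiff_linear. apply is_linear_snd.
  - intros y. simpl. reflexivity.
Qed.
Lemma multR (a b : R) : mult a b = a * b. Proof. reflexivity. Qed.
Lemma multR' (a b : R) : @mult (AbsRing.Ring R_AbsRing) a b = a * b. Proof. reflexivity. Qed.
Lemma is_derive_pairC (f g : R -> R) x a b : is_derive f x a -> is_derive g x b ->
  is_derive (fun t => (f t, g t) : C) x ((a, b) : C).
Proof.
  intros Ha Hb.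
  pose proof (is_derive_plus (V:=C_R_NormedModule) _ _ x _ _
    (is_derive_scal_l (V:=C_R_NormedModule) f x a ((1,0):C) Ha)
    (is_derive_scal_l (V:=C_R_NormedModule) g x b ((0,1):C) Hb)) as H.
  eapply is_derive_ext; [|eapply (fun H' => eq_ind _ (fun l => is_derive _ x l) H _ H')].
  - intros t. simpl. unfold plus, scal; simpl. unfold prod_plus, prod_scal; simpl.
    unfold plus, scal, mult; simpl. rewrite ?mult_one_r, ?mult_zero_r, ?plus_zero_r, ?plus_zero_l; repeat rewrite multR; repeat rewrite multR'; f_equal; unfold mult; simpl; ring.
  - simpl. unfold plus, scal; simpl. unfold prod_plus, prod_scal; simpl.
    unfold plus, scal, mult; simpl. f_equal; unfold mult; simpl; ring.
Qed.

Lemma is_derive_eq {V : NormedModule R_AbsRing} (f : R -> V) x l l' :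
  is_derive f x l -> l = l' -> is_derive f x l'.
Proof. intros H ->; exact H. Qed.

Lemma is_derive_C (f : R -> C) x l :
  is_derive (fun t => Re (f t)) x (Re l) -> is_derive (fun t => Im (f t)) x (Im l) ->
  is_derive f x l.
Proof.
  intros H1 H2. pose proof (is_derive_pairC _ _ x _ _ H1 H2) as H.
  eapply is_derive_ext.
  2: eapply is_derive_eq; [exact H|]. 
  - intros t. simpl. destruct (f t); reflexivity.
  - destruct l; reflexivity.
Qed.

Lemma dRplus (f g : R -> R) x a b : is_derive f x a -> is_derive g x b ->
  is_derive (fun t => f t + g t) x (a + b).
Proof. intros. apply (is_derive_plus f g x a b); auto. Qed.
Lemma dRminus (f g : R -> R) x a b : is_derive f x a -> is_derive g x b ->
  is_derive (fun t => f t - g t) x (a - b).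
Proof. intros. apply (is_derive_minus f g x a b); auto. Qed.
Lemma dRopp (f : R -> R) x a : is_derive f x a ->
  is_derive (fun t => - f t) x (- a).
Proof. intros. apply (is_derive_opp f x a); auto. Qed.
Lemma dRmult (f g : R -> R) x a b : is_derive f x a -> is_derive g x b ->
  is_derive (fun t => f t * g t) x (a * g x + f x * b).
Proof. intros. apply Derive.is_derive_mult; auto. Qed.

Open Scope C_scope.

Lemma dCmult (u v : R -> C) x du dv : is_derive u x du -> is_derive v x dv ->
  is_derive (fun t => u t * v t) x (du * v x + u x * dv).
Proof.
  intros Hu Hv.
  pose proof (is_derive_Re _ _ _ Hu) as Hur. pose proof (is_derive_Im _ _ _ Hu) as Hui.
  pose proof (is_derive_Re _ _ _ Hv) as Hvr. pose proof (is_derive_Im _ _ _ Hv) as Hvi.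
  apply is_derive_C.
  - eapply is_derive_ext. 2: eapply is_derive_eq.
    2: apply (dRminus _ _ _ _ _ (dRmult _ _ _ _ _ Hur Hvr) (dRmult _ _ _ _ _ Hui Hvi)).
    + intros t. simpl. reflexivity.
    + unfold Re, Im; simpl; ring.
  - eapply is_derive_ext. 2: eapply is_derive_eq.
    2: apply (dRplus _ _ _ _ _ (dRmult _ _ _ _ _ Hur Hvi) (dRmult _ _ _ _ _ Hui Hvr)).
    + intros t. simpl. reflexivity.
    + unfold Re, Im; simpl; ring.
Qed.

Lemma dCplus (u v : R -> C) x du dv : is_derive u x du -> is_derive v x dv ->
  is_derive (fun t => u t + v t) x (du + dv).
Proof.
  intros Hu Hv.
  pose proof (is_derive_Re _ _ _ Hu) as Hur. pose proof (is_derive_Im _ _ _ Hu) as Hui.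
  pose proof (is_derive_Re _ _ _ Hv) as Hvr. pose proof (is_derive_Im _ _ _ Hv) as Hvi.
  apply is_derive_C.
  - eapply is_derive_ext. 2: apply (dRplus _ _ _ _ _ Hur Hvr). intros t; reflexivity.
  - eapply is_derive_ext. 2: apply (dRplus _ _ _ _ _ Hui Hvi). intros t; reflexivity.
Qed.

Lemma dCopp (u : R -> C) x du : is_derive u x du ->
  is_derive (fun t => - u t) x (- du).
Proof.
  intros Hu.
  pose proof (is_derive_Re _ _ _ Hu) as Hur. pose proof (is_derive_Im _ _ _ Hu) as Hui.
  apply is_derive_C.
  - eapply is_derive_ext. 2: apply (dRopp _ _ _ Hur). intros t; reflexivity.
  - eapply is_derive_ext. 2: apply (dRopp _ _ _ Hui). intros t; reflexivity.
Qed.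

Lemma dCminus (u v : R -> C) x du dv : is_derive u x du -> is_derive v x dv ->
  is_derive (fun t => u t - v t) x (du - dv).
Proof. intros. apply (dCplus u (fun t => - v t)); auto. apply dCopp; auto. Qed.

Lemma dCconj (u : R -> C) x du : is_derive u x du ->
  is_derive (fun t => Cconj (u t)) x (Cconj du).
Proof.
  intros Hu.
  pose proof (is_derive_Re _ _ _ Hu) as Hur. pose proof (is_derive_Im _ _ _ Hu) as Hui.
  apply is_derive_C.
  - eapply is_derive_ext. 2: apply Hur. intros t; reflexivity.
  - eapply is_derive_ext. 2: apply (dRopp _ _ _ Hui). intros t; reflexivity.
Qed.

Lemma dCconst (c : C) (x : R) : is_derive (fun _ : R => c) x (RtoC 0).
Proof.
  apply is_derive_C.
  - eapply is_derive_eq. apply (is_derive_const (V:=R_NormedModule)). reflexivity.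
  - eapply is_derive_eq. apply (is_derive_const (V:=R_NormedModule)). reflexivity.
Qed.

Lemma dRtoC (r : R -> R) x dr : is_derive r x dr -> is_derive (fun t => RtoC (r t)) x (RtoC dr).
Proof.
  intros H. apply is_derive_C.
  - exact H.
  - apply (is_derive_ext (fun _ => 0%R)). intros; reflexivity.
    eapply is_derive_eq. apply (is_derive_const (V:=R_NormedModule)). reflexivity.
Qed.

Lemma dCshift (g : R -> C) a s l : is_derive g (a + s)%R l ->
  is_derive (fun s => g (a + s)%R) s l.
Proof.
  intros H.
  pose proof (is_derive_Re _ _ _ H) as Hr. pose proof (is_derive_Im _ _ _ H) as Hi.
  apply is_derive_C.
  - eapply is_derive_eq. apply (is_derive_comp (fun t => Re (g t)) (fun s => a + s)%R).
    exact Hr. eapply is_derive_eq. apply (dRplus _ _ _ _ _ (is_derive_const (V:=R_NormedModule) a s) (is_derive_id s)).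
    reflexivity. unfold scal; simpl. unfold mult; simpl. unfold zero, one; simpl. ring.
  - eapply is_derive_eq. apply (is_derive_comp (fun t => Im (g t)) (fun s => a + s)%R).
    exact Hi. eapply is_derive_eq. apply (dRplus _ _ _ _ _ (is_derive_const (V:=R_NormedModule) a s) (is_derive_id s)).
    reflexivity. unfold scal; simpl. unfold mult; simpl. unfold zero, one; simpl. ring.
Qed.

Lemma dCshiftm (g : R -> C) a s l : is_derive g (a - s)%R l ->
  is_derive (fun s => g (a - s)%R) s (- l).
Proof.
  intros H.
  pose proof (is_derive_Re _ _ _ H) as Hr. pose proof (is_derive_Im _ _ _ H) as Hi.
  apply is_derive_C.
  - eapply is_derive_eq. apply (is_derive_comp (fun t => Re (g t)) (fun s => a - s)%R).
    exact Hr. eapply is_derive_eq. apply (dRminus _ _ _ _ _ (is_derive_const (V:=R_NormedModule) a s) (is_derive_id s)).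
    reflexivity. unfold scal; simpl. unfold mult; simpl. unfold zero, one, Re, Im; simpl. ring.
  - eapply is_derive_eq. apply (is_derive_comp (fun t => Im (g t)) (fun s => a - s)%R).
    exact Hi. eapply is_derive_eq. apply (dRminus _ _ _ _ _ (is_derive_const (V:=R_NormedModule) a s) (is_derive_id s)).
    reflexivity. unfold scal; simpl. unfold mult; simpl. unfold zero, one, Re, Im; simpl. ring.
Qed.
Close Scope C_scope.
Lemma sqrt2_le_2 : sqrt 2 <= 2.
Proof.
  rewrite <- (sqrt_square 2) at 2 by lra. apply sqrt_le_1; lra.
Qed.

Lemma Cmod_le_Rmax (z : C) : Cmod z <= 2 * Rmax (Rabs (fst z)) (Rabs (snd z)).
Proof.
  eapply Rle_trans. apply Cmod_2Rmax. apply Rmult_le_compat_r.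
  eapply Rle_trans. apply Rabs_pos. apply Rmax_l. apply sqrt2_le_2.
Qed.

Lemma MVI_C (E E' : R -> C) a b M : a <= b -> (forall s, is_derive E s (E' s)) ->
  (forall s, a <= s <= b -> Cmod (E' s) <= M) -> Cmod (E b - E a)%C <= 2 * (M * (b - a)).
Proof.
  intros Hab Hd Hb.
  assert (H1 : Rabs (Re (E b) - Re (E a)) <= M * (b - a)).
  { apply (MVI_R (fun t => Re (E t)) (fun t => Re (E' t))); auto.
    intros s. apply is_derive_Re. apply Hd.
    intros s Hs. eapply Rle_trans. 2: apply (Hb s Hs).
    eapply Rle_trans. 2: apply Rmax_Cmod. apply Rmax_l. }
  assert (H2 : Rabs (Im (E b) - Im (E a)) <= M * (b - a)).
  { apply (MVI_R (fun t => Im (E t)) (fun t => Im (E' t))); auto.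
    intros s. apply is_derive_Im. apply Hd.
    intros s Hs. eapply Rle_trans. 2: apply (Hb s Hs).
    eapply Rle_trans. 2: apply Rmax_Cmod. apply Rmax_r. }
  eapply Rle_trans. apply Cmod_le_Rmax. apply Rmult_le_compat_l. lra.
  apply Rmax_lub.
  - replace (fst (E b - E a)%C) with (Re (E b) - Re (E a)) by (unfold Re; simpl; ring). exact H1.
  - replace (snd (E b - E a)%C) with (Im (E b) - Im (E a)) by (unfold Im; simpl; ring). exact H2.
Qed.
Open Scope R_scope.
Open Scope C_scope.

Definition T3 (x y z : C) : C := x * y * Cconj z.
Definition fC (p c n : C) : C := Ci * (- T3 c c c + 2 * T3 p p c + 2 * T3 n n c).
Definition DfC (p c n p' c' n' : C) : C :=
  Ci * (- (T3 c' c c + T3 c c' c + T3 c c c')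
        + 2 * (T3 p' p c + T3 p p' c + T3 p p c')
        + 2 * (T3 n' n c + T3 n n' c + T3 n n c')).

Lemma Cconj_minus (a b : C) : Cconj (a - b) = Cconj a - Cconj b.
Proof. destruct a, b; unfold Cconj, Cminus, Cplus, Copp; simpl; f_equal; ring. Qed.
Lemma Cconj_plus (a b : C) : Cconj (a + b) = Cconj a + Cconj b.
Proof. destruct a, b; unfold Cconj, Cminus, Cplus, Copp; simpl; f_equal; ring. Qed.

Lemma Cb_plus a b (A B : R) : Cmod a <= A -> Cmod b <= B -> Cmod (a + b) <= A + B.
Proof. intros; eapply Rle_trans; [apply Cmod_triangle|lra]. Qed.
Lemma Cb_minus a b (A B : R) : Cmod a <= A -> Cmod b <= B -> Cmod (a - b) <= A + B.
Proof. intros; eapply Rle_trans; [apply Cmod_triangle|]. rewrite Cmod_opp; lra. Qed.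
Lemma Cb_opp a (A : R) : Cmod a <= A -> Cmod (- a) <= A.
Proof. intros; rewrite Cmod_opp; lra. Qed.
Lemma Cb_conj a (A : R) : Cmod a <= A -> Cmod (Cconj a) <= A.
Proof. intros; rewrite Cmod_conj; lra. Qed.
Lemma Cb_mult a b (A B : R) : Cmod a <= A -> Cmod b <= B -> Cmod (a * b) <= A * B.
Proof.
  intros; rewrite Cmod_mult. apply Rmult_le_compat; auto using Cmod_ge_0.
Qed.
Lemma Cb_Ci : Cmod Ci <= 1.
Proof. rewrite Cmod_Ci; lra. Qed.
Lemma Cb_2 : Cmod 2 <= 2.
Proof. rewrite Cmod_R, Rabs_right; lra. Qed.
Lemma Cb_T3 x y z (X Y Z : R) : Cmod x <= X -> Cmod y <= Y -> Cmod z <= Z -> Cmod (T3 x y z) <= X * Y * Z.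
Proof. intros. unfold T3. apply Cb_mult; [apply Cb_mult|apply Cb_conj]; auto. Qed.

Ltac cb := first [ eassumption | apply Cb_Ci | apply Cb_2
  | eapply Cb_T3; [cb|cb|cb]
  | eapply Cb_plus; [cb|cb] | eapply Cb_minus; [cb|cb]
  | eapply Cb_mult; [cb|cb] | eapply Cb_conj; cb | eapply Cb_opp; cb ].

Lemma fC_lip x1 x2 x3 y1 y2 y3 (r D : R) :
  Cmod x1 <= r -> Cmod x2 <= r -> Cmod x3 <= r ->
  Cmod y1 <= r -> Cmod y2 <= r -> Cmod y3 <= r ->
  Cmod (x1 - y1) <= D -> Cmod (x2 - y2) <= D -> Cmod (x3 - y3) <= D ->
  Cmod (fC x1 x2 x3 - fC y1 y2 y3) <= 15 * (r * r) * D.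
Proof.
  intros.
  assert (E : fC x1 x2 x3 - fC y1 y2 y3 =
    Ci * (- (T3 (x2 - y2) x2 x2 + T3 y2 (x2 - y2) x2 + T3 y2 y2 (x2 - y2))
          + 2 * (T3 (x1 - y1) x1 x2 + T3 y1 (x1 - y1) x2 + T3 y1 y1 (x2 - y2))
          + 2 * (T3 (x3 - y3) x3 x2 + T3 y3 (x3 - y3) x2 + T3 y3 y3 (x2 - y2)))).
  { unfold fC, T3. rewrite !Cconj_minus. ring. }
  rewrite E. eapply Rle_trans. cb. right; ring.
Qed.

Lemma Eprime_md mp mc mn dp dc dn ep ec en (s r del mu : R) :
  Cmod mp <= r -> Cmod mc <= r -> Cmod mn <= r ->
  Cmod dp <= del -> Cmod dc <= del -> Cmod dn <= del ->
  Cmod ep <= mu -> Cmod ec <= mu -> Cmod en <= mu -> 0 <= s ->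
  Cmod (fC (mp + dp) (mc + dc) (mn + dn) + fC (mp - dp) (mc - dc) (mn - dn)
        - (2 * fC mp mc mn + RtoC (2 * s) * DfC mp mc mn ep ec en))
   <= 30 * r * (del * del) + 2 * s * (15 * (r * r) * mu).
Proof.
  intros.
  assert (Hs : Cmod (RtoC (2 * s)) <= 2 * s).
  { rewrite Cmod_R, Rabs_right; lra. }
  set (S := fun x y z dx dy dz : C => 2 * (dx * dy * Cconj z + dx * y * Cconj dz + x * dy * Cconj dz)).
  assert (E : fC (mp + dp) (mc + dc) (mn + dn) + fC (mp - dp) (mc - dc) (mn - dn)
        - (2 * fC mp mc mn + RtoC (2 * s) * DfC mp mc mn ep ec en) =
     Ci * (- S mc mc mc dc dc dc + 2 * S mp mp mc dp dp dc + 2 * S mn mn mc dn dn dc)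
     - RtoC (2 * s) * DfC mp mc mn ep ec en).
  { unfold S, fC, T3. rewrite !Cconj_minus, !Cconj_plus. ring. }
  rewrite E. unfold S, DfC. eapply Rle_trans. cb. right; ring.
Qed.

Lemma Eprime_uv up uc un vp vc vn ep ec en (s r del mu : R) :
  Cmod ((up + vp) / 2) <= r -> Cmod ((uc + vc) / 2) <= r -> Cmod ((un + vn) / 2) <= r ->
  Cmod ((up - vp) / 2) <= del -> Cmod ((uc - vc) / 2) <= del -> Cmod ((un - vn) / 2) <= del ->
  Cmod ep <= mu -> Cmod ec <= mu -> Cmod en <= mu -> 0 <= s ->
  Cmod (fC up uc un + fC vp vc vn
        - (2 * fC ((up + vp) / 2) ((uc + vc) / 2) ((un + vn) / 2)
           + RtoC (2 * s) * DfC ((up + vp) / 2) ((uc + vc) / 2) ((un + vn) / 2) ep ec en))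
   <= 30 * r * (del * del) + 2 * s * (15 * (r * r) * mu).
Proof.
  intros.
  replace (fC up uc un + fC vp vc vn) with
    (fC ((up + vp) / 2 + (up - vp) / 2) ((uc + vc) / 2 + (uc - vc) / 2) ((un + vn) / 2 + (un - vn) / 2)
     + fC ((up + vp) / 2 - (up - vp) / 2) ((uc + vc) / 2 - (uc - vc) / 2) ((un + vn) / 2 - (un - vn) / 2)).
  2:{ f_equal; f_equal; field. }
  apply Eprime_md; auto.
Qed.

Lemma dT3 (x y z : R -> C) s x' y' z' :
  is_derive x s x' -> is_derive y s y' -> is_derive z s z' ->
  is_derive (fun t => T3 (x t) (y t) (z t)) s (T3 x' (y s) (z s) + T3 (x s) y' (z s) + T3 (x s) (y s) z').
Proof.
  intros Hx Hy Hz. unfold T3.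
  eapply is_derive_eq. apply dCmult. apply dCmult; eauto. apply dCconj; eauto.
  cbv beta. match goal with |- ?a = ?b => change (@eq C a b) end. ring.
Qed.

Lemma dfC (p c n : R -> C) s p' c' n' :
  is_derive p s p' -> is_derive c s c' -> is_derive n s n' ->
  is_derive (fun t => fC (p t) (c t) (n t)) s (DfC (p s) (c s) (n s) p' c' n').
Proof.
  intros Hp Hc Hn. unfold fC.
  eapply is_derive_eq. apply dCmult. apply dCconst.
  apply dCplus. apply dCplus. apply dCopp. apply dT3; eauto.
  apply dCmult. apply dCconst. apply dT3; eauto.
  apply dCmult. apply dCconst. apply dT3; eauto.
  cbv beta. unfold DfC. match goal with |- ?a = ?b => change (@eq C a b) end. ring.
Qed.
Lemma Cconj_div2 (a : C) : Cconj (a / 2) = Cconj a / 2.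
Proof. destruct a; unfold Cconj, Cdiv, Cmult, Cinv; simpl; f_equal; field. Qed.

Lemma toy_rhs_fC b j : toy_rhs b j = fC (b (j-1)%nat) (b j) (b (j+1)%nat).
Proof. unfold toy_rhs, fC, T3. rewrite Cmod2_conj. ring. Qed.

Definition dd (N : nat) (u v : cvec) (k : nat) : C := (ext N u k - ext N v k) / 2.

Lemma avm_eq N u v j : avm N u v j = mid N u v j * Cconj (mid N u v j) + dd N u v j * Cconj (dd N u v j).
Proof.
  unfold avm, mid, dd. rewrite RtoC_div by lra. rewrite RtoC_plus.
  rewrite !Cmod2_conj, !Cconj_div2, Cconj_plus, Cconj_minus. field.
Qed.

Lemma avq_eq N u v j : avq N u v j = mid N u v j * mid N u v j + dd N u v j * dd N u v j.
Proof. unfold avq, mid, dd. field. Qed.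

Lemma Fsch_decomp sc N u v j :
  Fsch sc N u v j = fC (mid N u v (j-1)) (mid N u v j) (mid N u v (j+1))
    + match sc with
      | Midpt => 0
      | Mass => - Ci * (dd N u v j * Cconj (dd N u v j)) * mid N u v j
      | Eng => - Ci * (dd N u v j * Cconj (dd N u v j)) * mid N u v j
               + 2 * Ci * Cconj (mid N u v j) * (dd N u v (j+1) * dd N u v (j+1) + dd N u v (j-1) * dd N u v (j-1))
      end.
Proof.
  destruct sc; unfold Fsch; cbv zeta; rewrite ?avm_eq, ?avq_eq; unfold fC, T3.
  - rewrite Cmod2_conj. ring.
  - ring.
  - ring.
Qed.

Close Scope C_scope.
Open Scope R_scope.

Lemma sum_ge0 (f : nat -> R) n : (forall i, 0 <= f i) -> 0 <= sum_n_m f 1 n.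
Proof.
  intros Hf. induction n.
  - rewrite sum_n_m_zero by lia. unfold zero; simpl; lra.
  - rewrite sum_n_Sm by lia. unfold plus; simpl. specialize (Hf (S n)). lra.
Qed.

Lemma term_le_sum (f : nat -> R) n k : (forall i, 0 <= f i) -> (1 <= k <= n)%nat -> f k <= sum_n_m f 1 n.
Proof.
  intros Hf. induction n; intros Hk.
  - lia.
  - rewrite sum_n_Sm by lia. unfold plus; simpl.
    destruct (Nat.eq_dec k (S n)) as [->|Hne].
    + pose proof (sum_ge0 f n Hf). lra.
    + assert (f k <= sum_n_m f 1 n) by (apply IHn; lia). specialize (Hf (S n)). lra.
Qed.

Lemma sum_le_const (f : nat -> R) n X : (forall k, (1 <= k <= n)%nat -> f k <= X) -> sum_n_m f 1 n <= INR n * X.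
Proof.
  induction n; intros Hk.
  - rewrite sum_n_m_zero by lia. unfold zero; simpl; lra.
  - rewrite sum_n_Sm by lia. rewrite S_INR. change (plus (sum_n_m f 1 n) (f (S n))) with (sum_n_m f 1 n + f (S n)).
    assert (sum_n_m f 1 n <= INR n * X) by (apply IHn; intros; apply Hk; lia).
    assert (f (S n) <= X) by (apply Hk; lia). lra.
Qed.

Lemma telescope (h : nat -> R) n : sum_n_m (fun k => h k - h (k - 1)%nat) 1 n = h n - h 0%nat.
Proof.
  induction n.
  - rewrite sum_n_m_zero by lia. unfold zero; simpl; lra.
  - rewrite sum_n_Sm by lia. unfold plus; simpl. rewrite IHn. rewrite Nat.sub_0_r. ring.
Qed.

Lemma d_sum (g g' : nat -> R -> R) t n :
  (forall k, (1 <= k <= n)%nat -> is_derive (g k) t (g' k t)) ->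
  is_derive (fun s => sum_n_m (fun k => g k s) 1 n) t (sum_n_m (fun k => g' k t) 1 n).
Proof.
  induction n; intros Hd.
  - rewrite sum_n_m_zero by lia.
    apply (is_derive_ext (fun _ => 0)). intros; rewrite sum_n_m_zero by lia; reflexivity.
    eapply is_derive_eq. apply (is_derive_const (V:=R_NormedModule)). reflexivity.
  - rewrite sum_n_Sm by lia.
    apply (is_derive_ext (fun s => sum_n_m (fun k => g k s) 1 n + g (S n) s)).
    intros; rewrite sum_n_Sm by lia; reflexivity.
    apply dRplus. apply IHn; intros; apply Hd; lia. apply Hd; lia.
Qed.

Definition Gm (x y : C) : R := Im (x * x * Cconj y * Cconj y)%C.

Lemma mass_alg (p c n : C) :
  2 * (Re c * Re (fC p c n) + Im c * Im (fC p c n)) = 4 * (Gm c n - Gm p c).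
Proof.
  destruct p as [p1 p2], c as [c1 c2], n as [n1 n2].
  unfold fC, T3, Gm, Re, Im, Cconj, Cmult, Cplus, Copp, Ci; simpl. ring.
Qed.

Lemma dCmod2 (u : R -> C) t du : is_derive u t du ->
  is_derive (fun s => Cmod (u s) ^ 2) t (2 * (Re (u t) * Re du + Im (u t) * Im du)).
Proof.
  intros H.
  apply (is_derive_ext (fun s => Re (u s) * Re (u s) + Im (u s) * Im (u s))).
  intros s; rewrite Cmod2_alt; match goal with |- ?a = ?b => change (@eq R a b) end; ring.
  pose proof (is_derive_Re _ _ _ H) as Hr. pose proof (is_derive_Im _ _ _ H) as Hi.
  eapply is_derive_eq. apply (dRplus _ _ _ _ _ (dRmult _ _ _ _ _ Hr Hr) (dRmult _ _ _ _ _ Hi Hi)).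
  cbv beta. match goal with |- ?a = ?b => change (@eq R a b) end. ring.
Qed.

Lemma mass_cons N b : toy_solution N b -> forall t,
  sum_n_m (fun k => Cmod (b t k) ^ 2) 1 N = sum_n_m (fun k => Cmod (b 0 k) ^ 2) 1 N.
Proof.
  intros [H0 [HN1 Hd]] t.
  set (S := fun s => sum_n_m (fun k => Cmod (b s k) ^ 2) 1 N).
  assert (HS : forall s, is_derive S s 0).
  { intros s. unfold S. eapply is_derive_eq.
    apply (d_sum (fun k s => Cmod (b s k) ^ 2) (fun k s => 2 * (Re (b s k) * Re (toy_rhs (b s) k) + Im (b s k) * Im (toy_rhs (b s) k)))).
    intros k Hk. apply dCmod2. apply Hd; lia.
    rewrite (sum_n_m_ext_loc _ (fun k => 4 * Gm (b s k) (b s (k+1)%nat) - 4 * Gm (b s (k-1)%nat) (b s ((k - 1) + 1)%nat))).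
    - rewrite (telescope (fun k => 4 * Gm (b s k) (b s (k+1)%nat))).
      rewrite Nat.add_1_r, HN1, H0. unfold Gm, Im, Cconj, Cmult; simpl. Rring.
    - intros k Hk. rewrite toy_rhs_fC, mass_alg.
      replace (k - 1 + 1)%nat with k by lia. Rring. }
  fold (S t). fold (S 0).
  destruct (Rle_dec 0 t).
  - pose proof (MVI_R S (fun _ => 0) 0 t 0 r HS) as Hm.
    assert (Rabs (S t - S 0) <= 0 * (t - 0)) by (apply Hm; intros; rewrite Rabs_R0; lra).
    pose proof (Rabs_pos (S t - S 0)). assert (Rabs (S t - S 0) = 0) by nra.
    apply Rabs_eq_0 in H2. lra.
  - pose proof (MVI_R S (fun _ => 0) t 0 0 ltac:(lra) HS) as Hm.
    assert (Rabs (S 0 - S t) <= 0 * (0 - t)) by (apply Hm; intros; rewrite Rabs_R0; lra).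
    pose proof (Rabs_pos (S 0 - S t)). assert (Rabs (S 0 - S t) = 0) by nra.
    apply Rabs_eq_0 in H2. lra.
Qed.

Lemma ext_b N b : toy_solution N b -> forall t k, (k <= S N)%nat -> ext N (b t) k = b t k.
Proof.
  intros [H0 [HN1 _]] t k Hk. unfold ext.
  destruct (Nat.leb_spec 1 k); destruct (Nat.leb_spec k N); simpl; auto.
  - assert (k = S N) by lia. subst. rewrite HN1. reflexivity.
  - assert (k = 0%nat) by lia. subst. rewrite H0. reflexivity.
  - lia.
Qed.

Lemma bnd N b : toy_solution N b -> forall t k, (k <= S N)%nat -> Cmod (b t k) <= cnorm N (b 0).
Proof.
  intros Hs t k Hk. pose proof Hs as [H0 [HN1 _]].
  unfold cnorm.
  destruct (Nat.eq_dec k 0) as [->|H1]. { rewrite H0, Cmod_0. apply sqrt_pos. }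
  destruct (Nat.eq_dec k (S N)) as [->|H2]. { rewrite HN1, Cmod_0. apply sqrt_pos. }
  rewrite <- (mass_cons N b Hs t).
  rewrite <- (sqrt_pow2 (Cmod (b t k))) by apply Cmod_ge_0.
  apply sqrt_le_1_alt.
  apply (term_le_sum (fun k0 => Cmod (b t k0) ^ 2)). intros; apply pow2_ge_0. lia.
Qed.

Definition Dv (N : nat) (b : R -> cvec) (t : R) (k : nat) : C :=
  if andb (Nat.leb 1 k) (Nat.leb k N) then toy_rhs (b t) k else RtoC 0.

Lemma derivD N b : toy_solution N b -> forall t k, (k <= S N)%nat -> is_derive (fun s => b s k) t (Dv N b t k).
Proof.
  intros [H0 [HN1 Hd]] t k Hk. unfold Dv.
  destruct (Nat.leb_spec 1 k); destruct (Nat.leb_spec k N); simpl.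
  - apply Hd; lia.
  - assert (k = S N) by lia. subst. apply (is_derive_ext (fun _ : R => RtoC 0)). intros; rewrite HN1; reflexivity. apply dCconst.
  - assert (k = 0%nat) by lia. subst. apply (is_derive_ext (fun _ : R => RtoC 0)). intros; rewrite H0; reflexivity. apply dCconst.
  - lia.
Qed.

Lemma Dv_fC N b t k : (1 <= k <= N)%nat -> Dv N b t k = fC (b t (k-1)%nat) (b t k) (b t (k+1)%nat).
Proof.
  intros Hk. unfold Dv. destruct (Nat.leb_spec 1 k); destruct (Nat.leb_spec k N); try lia. simpl.
  apply toy_rhs_fC.
Qed.

Lemma Dv_out N b t k : ~ (1 <= k <= N)%nat -> Dv N b t k = RtoC 0.
Proof.
  intros Hk. unfold Dv. destruct (Nat.leb_spec 1 k); destruct (Nat.leb_spec k N); try lia; reflexivity.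
Qed.

Lemma fC_bound p c n (r : R) : Cmod p <= r -> Cmod c <= r -> Cmod n <= r -> Cmod (fC p c n) <= 5 * r ^ 3.
Proof. intros. unfold fC. eapply Rle_trans. cb. right; ring. Qed.

Lemma boundD N b : toy_solution N b -> forall t k, (k <= S N)%nat ->
  Cmod (Dv N b t k) <= 5 * cnorm N (b 0) ^ 3.
Proof.
  intros Hs t k Hk.
  assert (0 <= cnorm N (b 0)) by apply sqrt_pos.
  destruct (Compare_dec.le_lt_dec 1 k); [destruct (Compare_dec.le_lt_dec k N)|].
  - rewrite Dv_fC by lia. apply fC_bound; apply bnd; auto; lia.
  - rewrite Dv_out by lia. rewrite Cmod_0. nra.
  - rewrite Dv_out by lia. rewrite Cmod_0. nra.
Qed.

Lemma lipB N b : toy_solution N b -> forall k t t', (k <= S N)%nat -> t <= t' ->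
  Cmod (b t' k - b t k)%C <= 2 * (5 * cnorm N (b 0) ^ 3 * (t' - t)).
Proof.
  intros Hs k t t' Hk Ht.
  apply (MVI_C (fun s => b s k) (fun s => Dv N b s k)); auto.
  intros s. apply derivD; auto.
  intros s _. apply boundD; auto.
Qed.

Lemma lipB2 N b : toy_solution N b -> forall k t t', (k <= S N)%nat -> t <= t' ->
  Cmod (b t k - b t' k)%C <= 2 * (5 * cnorm N (b 0) ^ 3 * (t' - t)).
Proof.
  intros. replace (b t k - b t' k)%C with (- (b t' k - b t k))%C by ring.
  rewrite Cmod_opp. apply lipB; auto.
Qed.

Lemma lipD N b : toy_solution N b -> forall k t t', (k <= S N)%nat -> t <= t' ->
  Cmod (Dv N b t' k - Dv N b t k)%C <= 15 * (cnorm N (b 0) * cnorm N (b 0)) * (2 * (5 * cnorm N (b 0) ^ 3 * (t' - t))).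
Proof.
  intros Hs k t t' Hk Ht.
  assert (0 <= cnorm N (b 0)) by apply sqrt_pos.
  destruct (Compare_dec.le_lt_dec 1 k); [destruct (Compare_dec.le_lt_dec k N)|].
  - rewrite !Dv_fC by lia. apply fC_lip; first [apply bnd | apply lipB]; auto; lia.
  - rewrite !Dv_out by lia. replace (RtoC 0 - RtoC 0)%C with (RtoC 0) by ring. rewrite Cmod_0.
    assert (0 <= cnorm N (b 0) ^ 3) by (apply pow_le; auto). repeat apply Rmult_le_pos; auto; lra.
  - rewrite !Dv_out by lia. replace (RtoC 0 - RtoC 0)%C with (RtoC 0) by ring. rewrite Cmod_0.
    assert (0 <= cnorm N (b 0) ^ 3) by (apply pow_le; auto). repeat apply Rmult_le_pos; auto; lra.
Qed.

Lemma mid_bound (u v : C) (r : R) : Cmod u <= r -> Cmod v <= r -> Cmod ((u + v) / 2)%C <= r.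
Proof.
  intros. rewrite Cmod_div by (intro H'; injection H'; lra).
  rewrite Cmod_R, Rabs_right by lra. pose proof (Cmod_triangle u v). lra.
Qed.

Lemma diff_bound (u v : C) (Y X : R) : Cmod (u - v)%C <= Y -> Y <= 2 * X -> Cmod ((u - v) / 2)%C <= X.
Proof.
  intros. rewrite Cmod_div by (intro H'; injection H'; lra).
  rewrite Cmod_R, Rabs_right by lra. lra.
Qed.

Definition Acst (r : R) : R := let L := 5 * r ^ 3 in 120 * r * (L * L) + 900 * r ^ 4 * L + 5 * r * (L * L).

Lemma comp_bound N b sc : toy_solution N b -> forall dt n j, 0 < dt -> (1 <= j <= N)%nat ->
  Cmod (lte sc N b dt n j) <= Acst (cnorm N (b 0)) * dt ^ 3.
Proof.
  intros Hs dt n j Hdt Hj.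
  set (r := cnorm N (b 0)).
  assert (Hr : 0 <= r) by apply sqrt_pos.
  set (L := 5 * r ^ 3).
  assert (HL : 0 <= L) by (unfold L; assert (0 <= r ^ 3) by (apply pow_le; auto); lra).
  set (t0 := INR n * dt).
  set (tm := t0 + dt / 2).
  set (Mk := fun (k : nat) (s : R) => ((b (tm + s)%R k + b (tm - s)%R k) / 2)%C).
  set (Mp := fun (k : nat) (s : R) => ((Dv N b (tm + s)%R k - Dv N b (tm - s)%R k) / 2)%C).
  set (E := fun s : R => (b (tm + s)%R j - b (tm - s)%R j - RtoC (2 * s)%R * fC (Mk (j-1)%nat s) (Mk j s) (Mk (j+1)%nat s))%C).
  set (E' := fun s : R => (Dv N b (tm + s)%R j + Dv N b (tm - s)%R j
     - (2 * fC (Mk (j-1)%nat s) (Mk j s) (Mk (j+1)%nat s)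
        + RtoC (2 * s)%R * DfC (Mk (j-1)%nat s) (Mk j s) (Mk (j+1)%nat s) (Mp (j-1)%nat s) (Mp j s) (Mp (j+1)%nat s)))%C).
  assert (HMk : forall k s, (k <= S N)%nat -> is_derive (Mk k) s (Mp k s)).
  { intros k s Hk. unfold Mk, Mp.
    eapply is_derive_eq. apply (dCmult (fun s : R => b (tm + s)%R k + b (tm - s)%R k)%C (fun _ : R => / 2)%C).
    apply dCplus. apply (dCshift (fun t => b t k) tm s). apply (derivD N b Hs); auto. apply (dCshiftm (fun t => b t k) tm s). apply (derivD N b Hs); auto.
    apply dCconst. cbv beta. match goal with |- ?a = ?b => change (@eq C a b) end. field. }
  assert (Hd2 : forall s : R, is_derive (fun s : R => 2 * s) s 2).
  { intros s. apply (is_derive_ext (fun s => 2 * (fun x => x) s)). reflexivity.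
    eapply is_derive_eq. apply is_derive_scal. apply (is_derive_id (K:=R_AbsRing)). unfold one; simpl; ring. }
  assert (Hder : forall s, is_derive E s (E' s)).
  { intros s. unfold E, E'.
    eapply is_derive_eq. apply dCminus. apply dCminus.
    apply (dCshift (fun t => b t j) tm s). apply (derivD N b Hs); auto; lia. apply (dCshiftm (fun t => b t j) tm s). apply (derivD N b Hs); auto; lia.
    apply dCmult. apply dRtoC. apply Hd2.
    apply dfC; apply HMk; lia.
    cbv beta. match goal with |- ?a = ?b => change (@eq C a b) end. ring. }
  set (Q := 120 * r * (L * L) + 900 * r ^ 4 * L).
  assert (HQ : 0 <= Q).
  { unfold Q. assert (0 <= r ^ 4) by (apply pow_le; auto).
    assert (0 <= r * (L * L)) by (apply Rmult_le_pos; auto; apply Rmult_le_pos; auto). nra. }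
  assert (HE' : forall s, 0 <= s <= dt / 2 -> Cmod (E' s) <= Q * dt ^ 2).
  { intros s Hs0. unfold E'. rewrite (Dv_fC N b (tm + s)%R j Hj), (Dv_fC N b (tm - s)%R j Hj). unfold Mk.
    eapply Rle_trans. apply (Eprime_uv _ _ _ _ _ _ _ _ _ s r (2 * L * s) (30 * (r * r) * L * s)).
    1-3: apply mid_bound; apply (bnd N b Hs); lia.
    1-3: eapply diff_bound; [apply (lipB N b Hs); lia || lra|]; apply Req_le; unfold L, r; ring.
    1-3: unfold Mp; eapply diff_bound; [apply (lipD N b Hs); lia || lra|]; apply Req_le; unfold L, r; ring.
    lra.
    replace (30 * r * (2 * L * s * (2 * L * s)) + 2 * s * (15 * (r * r) * (30 * (r * r) * L * s)))
      with (Q * (s * s)) by (unfold Q; ring).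
    apply Rmult_le_compat_l; auto. nra. }
  pose proof (MVI_C E E' 0 (dt / 2) (Q * dt ^ 2) ltac:(lra) Hder) as HM.
  assert (HM' : Cmod (E (dt / 2)%R - E 0%R)%C <= Q * dt ^ 3).
  { eapply Rle_trans. apply HM. exact HE'. right; field. }
  clear HM.
  assert (HE0 : E 0%R = RtoC 0).
  { unfold E. rewrite Rplus_0_r, Rminus_0_r, Rmult_0_r. ring. }
  set (t1 := INR (S n) * dt).
  assert (Ht1 : t1 = t0 + dt) by (unfold t1, t0; rewrite S_INR; ring).
  assert (Htp : (tm + dt / 2)%R = t1) by (unfold tm; rewrite Ht1; field).
  assert (Htm : (tm - dt / 2)%R = t0) by (unfold tm; field).
  assert (HEh : E (dt / 2)%R = (b t1 j - b t0 j - RtoC dt * fC (Mk (j-1)%nat (dt/2)%R) (Mk j (dt/2)%R) (Mk (j+1)%nat (dt/2)%R))%C).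
  { unfold E; cbv beta. rewrite Htp, Htm. replace (2 * (dt / 2))%R with dt by field. reflexivity. }
  assert (Hmid : forall k, (k <= S N)%nat -> mid N (b t0) (b t1) k = Mk k (dt / 2)%R).
  { intros k Hk. unfold mid, Mk. rewrite !(ext_b N b Hs) by lia. rewrite Htp, Htm. match goal with |- ?a = ?b => change (@eq C a b) end. field. }
  assert (Hdd : forall k, (k <= S N)%nat -> Cmod (dd N (b t0) (b t1) k) <= L * dt).
  { intros k Hk. unfold dd. rewrite !(ext_b N b Hs) by lia.
    eapply diff_bound. apply (lipB2 N b Hs k t0 t1); [lia|lra].
    apply Req_le. rewrite Ht1. unfold L, r. ring. }
  assert (Hmb : forall k, (k <= S N)%nat -> Cmod (mid N (b t0) (b t1) k) <= r).
  { intros k Hk. unfold mid. rewrite !(ext_b N b Hs) by lia. apply mid_bound; apply (bnd N b Hs); lia. }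
  assert (HX : 0 <= r * ((L * dt) * (L * dt))).
  { apply Rmult_le_pos; auto. apply Rmult_le_pos; apply Rmult_le_pos; lra. }
  set (u := b t0). set (v := b t1).
  assert (HR0 : Cmod (match sc with
      | Midpt => 0%C
      | Mass => (- Ci * (dd N u v j * Cconj (dd N u v j)) * mid N u v j)%C
      | Eng => (- Ci * (dd N u v j * Cconj (dd N u v j)) * mid N u v j
               + 2 * Ci * Cconj (mid N u v j) * (dd N u v (j+1) * dd N u v (j+1) + dd N u v (j-1) * dd N u v (j-1)))%C
      end) <= 5 * (r * ((L * dt) * (L * dt)))).
  { pose proof (Hdd j ltac:(lia)) as D1. pose proof (Hdd (j+1)%nat ltac:(lia)) as D2. pose proof (Hdd (j-1)%nat ltac:(lia)) as D3.
    pose proof (Hmb j ltac:(lia)) as M1.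
    destruct sc.
    - rewrite Cmod_0. lra.
    - eapply Rle_trans. cb. nra.
    - eapply Rle_trans. cb. right; ring. }
  change (lte sc N b dt n j) with (v j - u j - RtoC dt * Fsch sc N u v j)%C.
  rewrite Fsch_decomp.
  revert HR0. generalize (match sc return C with
      | Midpt => 0%C
      | Mass => (- Ci * (dd N u v j * Cconj (dd N u v j)) * mid N u v j)%C
      | Eng => (- Ci * (dd N u v j * Cconj (dd N u v j)) * mid N u v j
               + 2 * Ci * Cconj (mid N u v j) * (dd N u v (j+1) * dd N u v (j+1) + dd N u v (j-1) * dd N u v (j-1)))%C
      end). intros R0 HR0.
  unfold u, v. rewrite !Hmid by lia.
  replace (b t1 j - b t0 j - RtoC dt * (fC (Mk (j - 1)%nat (dt / 2)%R) (Mk j (dt / 2)%R) (Mk (j + 1)%nat (dt / 2)%R) + R0))%C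
    with ((E (dt / 2)%R - E 0%R) - RtoC dt * R0)%C by (rewrite HE0, HEh; ring).
  eapply Rle_trans. apply Cb_minus. exact HM'. apply Cb_mult.
  rewrite Cmod_R, Rabs_right by lra. apply Rle_refl. exact HR0.
  right. unfold Acst, Q, L. ring.
Qed.

Lemma Acst_nonneg r : 0 <= r -> 0 <= Acst r.
Proof.
  intros Hr. unfold Acst.
  assert (0 <= 5 * r ^ 3) by (assert (0 <= r ^ 3) by (apply pow_le; auto); lra).
  assert (0 <= r ^ 4) by (apply pow_le; auto).
  repeat apply Rplus_le_le_0_compat; repeat apply Rmult_le_pos; auto; lra.
Qed.

Theorem lemma3p5 (N : nat) (HN : (1 <= N)%nat) (s : scheme) :
  exists Cst : R -> R,
    forall b : R -> cvec, toy_solution N b ->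
    forall (dt : R), 0 < dt -> forall n : nat,
      cnorm N (lte s N b dt n) <= Cst (cnorm N (b 0)) * dt ^ 3.
Proof.
  exists (fun r => sqrt (INR N) * Acst r).
  intros b Hs dt Hdt n.
  set (A := Acst (cnorm N (b 0))).
  assert (HA : 0 <= A) by (apply Acst_nonneg; apply sqrt_pos).
  assert (Hd3 : 0 <= A * dt ^ 3) by (apply Rmult_le_pos; auto; apply pow_le; lra).
  assert (Hsum : sum_n_m (fun j => Cmod (lte s N b dt n j) ^ 2) 1 N <= INR N * (A * dt ^ 3) ^ 2).
  { apply sum_le_const. intros k Hk. apply pow_incr. split. apply Cmod_ge_0.
    apply comp_bound; auto. }
  unfold cnorm at 1.
  eapply Rle_trans. apply sqrt_le_1_alt. exact Hsum.
  rewrite sqrt_mult_alt by apply pos_INR. rewrite sqrt_pow2 by exact Hd3.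
  right. ring.
Qed.
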